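(* Let $(D,D^* )$ be a pair of dual cellular dissections of a marked surface. Then the bound quiver $\bar Q_D=(Q_D,I_D)$ is a locally gentle bound quiver.
   Context: A marked surface $(\mathcal S,V\sqcup V^* )$ is an oriented surface with boundary with disjoint finite sets $V,V^*$ of marked points whose points on the boundary alternate. A $V$-dissection $D$ is a set of pairwise non-crossing arcs (up to homotopy, in minimal position) joining points of $V$; its edges are its arcs and the boundary arcs; it is cellular if the components of the complement of its edges (faces) are disks. $D$ and a cellular $V^*$-dissection $D^*$ are dual if there are mutually inverse bijections $V^*\leftrightarrow$ faces of $D$, $V\leftrightarrow$ faces of $D^*$ ($x\mapsto x^*$) with: $D$ has an edge joining $u,v$ separating faces $f,g$ iff $D^*$ has an edge joining $f^*,g^*$ separating $u^*,v^*$. The bound quiver $\bar Q_D=(Q_D,I_D)$: vertices are the arcs of $D$; there is an arrow $a\to b$ for each common endpoint $v$ of $a$ and $b$ such that $b$ comes immediately after $a$ in the counterclockwise order around $v$; $I_D$ is the ideal generated by the paths of length two corresponding to triples of consecutive edges in a face of $D$. A bound quiver $(Q,I)$ ($Q$ finite, $I$ an ideal of $kQ$ generated by linear combinations of paths of length $\ge2$, $kQ/I$ possibly infinite-dimensional) is locally gentle if each vertex has at most two incoming and two outgoing arrows, $I$ is generated by paths of length two, and for each arrow $\beta$ there is at most one $\alpha$ with $t(\alpha)=s(\beta)$, $\alpha\beta\notin I$, at most one with $t(\alpha)=s(\beta)$, $\alpha\beta\in I$, at most one $\gamma$ with $t(\beta)=s(\gamma)$, $\beta\gamma\notin I$, and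 at most one with $t(\beta)=s(\gamma)$, $\beta\gamma\in I$. *)

(* Defs.v *)
From HB Require Import structures.
From mathcomp Require Import all_boot all_order all_algebra all_fingroup.
Set Implicit Arguments. Unset Strict Implicit. Unset Printing Implicit Defensive.
Import GRing.Theory.

Record quiver := Quiver {
  qv : finType;
  qa : finType;
  qs : qa -> qv;
  qt : qa -> qv
}.

(* A bound quiver (Q, I) where I is the two-sided ideal of kQ generated by
   the set of length-two paths  [:: a; b]  with  brel a b. *)
Record bquiver := BQuiver {
  bq :> quiver;
  brel : qa bq -> qa bq -> bool
}.

(* Paths are written left to right: a path a_1 a_2 ... a_n has
   t(a_i) = s(a_{i+1}).  Non-trivial paths are nonempty sequences. *)
Definition is_path (Q : quiver) (p : seq (qa Q)) : bool :=
  sorted (fun a b => qt a == qs b) p.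

(* A generating term  c * u r v  of the ideal: u, v paths (possibly trivial,
   i.e. empty), r = [:: r1; r2] a generator, and u r v a genuine path. *)
Definition gen_term (B : bquiver) (k : Type) :=
  (k * (seq (qa B) * (qa B * qa B) * seq (qa B)))%type.

Definition gt_path (B : bquiver) (k : Type) (t : gen_term B k) : seq (qa B) :=
  let: (_, (u, (r1, r2), v)) := t in u ++ [:: r1; r2] ++ v.

Definition gt_ok (B : bquiver) (k : Type) (t : gen_term B k) : bool :=
  let: (_, (u, (r1, r2), v)) := t in brel r1 r2 && is_path (u ++ [:: r1; r2] ++ v).

(* The path p (a basis element of kQ) lies in the ideal I generated by the
   relations: p = sum_i c_i u_i r_i v_i in kQ, i.e. the coefficients of both
   sides agree on every path q. *)
Definition path_in_ideal (k : fieldType) (B : bquiver) (p : seq (qa B)) : Prop :=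
  exists L : seq (gen_term B k),
    all (@gt_ok B k) L /\
    forall q : seq (qa B),
      ((q == p)%:R : k)%R = (\sum_(t <- L | gt_path t == q) t.1)%R.

Definition locally_gentle (k : fieldType) (B : bquiver) : Prop :=
  let inI a b := path_in_ideal k (B := B) [:: a; b] in
  (* I is generated by paths of length two (genuine paths) *)
  (forall a b : qa B, brel a b -> qt a = qs b) /\
  (forall v : qv B, #|[set a | qt a == v]| <= 2 /\ #|[set a | qs a == v]| <= 2) /\
  (forall b : qa B,
     (forall a1 a2 : qa B, qt a1 = qs b -> qt a2 = qs b ->
        ~ inI a1 b -> ~ inI a2 b -> a1 = a2) /\
     (forall a1 a2 : qa B, qt a1 = qs b -> qt a2 = qs b ->
        inI a1 b -> inI a2 b -> a1 = a2) /\
     (forall c1 c2 : qa B, qt b = qs c1 -> qt b = qs c2 ->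
        ~ inI b c1 -> ~ inI b c2 -> c1 = c2) /\
     (forall c1 c2 : qa B, qt b = qs c1 -> qt b = qs c2 ->
        inI b c1 -> inI b c2 -> c1 = c2)).

(* The surface S is capped off: each boundary component is glued to a disk  *)
(* ("cap").  The graph formed by the arcs of D and the boundary arcs is     *)
(* cellularly embedded in the capped closed oriented surface, hence given   *)
(* by a combinatorial map on a finite set H of darts (half-edges):          *)
(*   al  : the fixed-point-free involution exchanging the two darts of an   *)
(*         edge;                                                            *)
(*   sg  : the rotation sending a dart at a vertex v to the next dart at v  *)
(*         in counterclockwise order (vertices = V = sg-orbits);            *)
(*   the corner between the darts h and sg h at a vertex lies in the face   *)
(*   traced by  phi := sg \o al  containing  sg h; faces = phi-orbits;      *)
(*   capd : the darts whose face is a cap (a boundary component).           *)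
(* Boundary arcs are the edges with one (cap) side; arcs of D are the edges *)
(* with no side in a cap.  The points of V^* are: one point on each         *)
(* boundary arc (alternation of V and V^* on the boundary) and the interior *)
(* points p : P, lying in the face of the dart  loc p.                      *)

Section Dissection.
Variables (H : finType) (al : H -> H) (sg : {perm H}) (capd : pred H).

Definition phi (h : H) : H := sg (al h).
Definition same_face (h h' : H) : bool := fconnect phi h h'.
Definition same_vertex (h h' : H) : bool := fconnect sg h h'.

Definition is_arc (h : H) : bool := ~~ capd h && ~~ capd (al h).

Definition arcset (h : H) : {set H} := [set h; al h].

Definition is_arc_set (A : {set H}) : bool := [exists h, is_arc h && (A == arcset h)].

Lemma arcset_is_arc_set h : is_arc h -> is_arc_set (arcset h).
Proof. by move=> Ha; apply/existsP; exists h; rewrite Ha eqxx. Qed.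

Definition QD0 : finType := {A : {set H} | is_arc_set A}.
(* arrows of Q_D: corners (h, sg h) at a vertex between two arcs;
   arrow from the arc of h to the arc of sg h (the next one ccw). *)
Definition QD1 : finType := {h : H | is_arc h && is_arc (sg h)}.

Definition QDs (a : QD1) : QD0 :=
  Sub (arcset (val a)) (arcset_is_arc_set (andP (valP a)).1).
Definition QDt (a : QD1) : QD0 :=
  Sub (arcset (sg (val a))) (arcset_is_arc_set (andP (valP a)).2).

(* relation: the corners of a and b are consecutive corners of a face, i.e.
   the arcs of (a, b) form three consecutive edges of a face of D. *)
Definition QDrel (a b : QD1) : bool := al (sg (val a)) == val b.

Definition QD : bquiver := @BQuiver (@Quiver QD0 QD1 QDs QDt) QDrel.

Definition dual_cellular_dissection (P : finType) (loc : P -> H) : Prop :=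
  (forall h, al (al h) = h) /\ (forall h, al h != h) /\
  (forall h h', connect (fun x y => (y == sg x) || (y == al x)) h h') /\
  (* caps are unions of faces; no edge has caps on both sides *)
  (forall h, capd (phi h) = capd h) /\ (forall h, ~~ (capd h && capd (al h))) /\
  (* a marked point lies on at most one boundary component, and only once *)
  (forall h h', capd h -> capd h' -> same_vertex h h' -> h = h') /\
  (forall p, ~~ capd (loc p)) /\
  (* duality: each face of D contains exactly one point of V^*
     (boundary points of V^* on its boundary arcs, or interior ones) *)
  (forall h, ~~ capd h ->
     #|[set x | same_face h x & capd (al x)]|
     + #|[set p | same_face h (loc p)]| = 1).

End Dissection.

(* Main.v *)
Require Import Defs.
From mathcomp Require Import all_boot all_order all_algebra all_fingroup.
Set Implicit Arguments. Unset Strict Implicit. Unset Printing Implicit Defensive.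
Import GRing.Theory.

Section Aux.
Variables (H : finType) (al : H -> H) (sg : {perm H}) (capd : pred H).
Hypothesis alK : forall h, al (al h) = h.

Let B := QD al sg capd.

Lemma arcset_eq x y : arcset al x = arcset al y -> y = x \/ y = al x.
Proof.
move=> E; have : y \in arcset al y by rewrite !inE eqxx.
by rewrite -E !inE => /orP[] /eqP ->; [left|right].
Qed.

Lemma arcset_al x : arcset al (al x) = arcset al x.
Proof. by apply/setP=> z; rewrite !inE alK orbC. Qed.

Lemma qt_qs (a b : qa B) : brel a b -> qt a = qs b.
Proof.
move=> /eqP E; apply: val_inj => /=; rewrite -E; exact/esym/arcset_al.
Qed.

Lemma inI_brel (k : fieldType) (a b : qa B) :
  path_in_ideal k (B := B) [:: a; b] -> brel a b.
Proof.
case=> L [HL Hq]; move: (Hq [:: a; b]); rewrite eqxx.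
case Hb: (brel a b) => // E.
suff : (1 : k)%R = 0%R by move/eqP; rewrite oner_eq0.
rewrite [LHS](E : _ = _ :> k); apply: big1_seq => t /andP[Ht tL].
move/allP: HL => /(_ _ tL); move: t Ht tL => [c [[u [r1 r2]] v]] /= /eqP Ep.
have Hs := congr1 size Ep.
case: u Ep Hs => [|x u] /=; last by move=> _ /eqP; rewrite size_cat /= !addnS.
case: v => [|x v] //= Ep _ _ /andP[Hr _].
by case: Ep => E1 E2; move: Hr Hb; rewrite E1 E2 /= => ->.
Qed.

Lemma brel_inI (k : fieldType) (a b : qa B) :
  brel a b -> path_in_ideal k (B := B) [:: a; b].
Proof.
move=> Hb; exists [:: (1%R : k, ([::], (a, b), [::]))]; split.
  by rewrite /= andbT; apply/andP; split => //; rewrite /is_path /= andbT; apply/eqP; exact: (qt_qs Hb).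
move=> q; rewrite big_cons big_nil /= GRing.addr0.
by case: (q =P [:: a; b]) => [->|/eqP]; rewrite ?eqxx // eq_sym => /negbTE ->.
Qed.

End Aux.

Theorem lemma4p3 (H : finType) (al : H -> H) (sg : {perm H}) (capd : pred H)
    (P : finType) (loc : P -> H) (k : fieldType) :
  dual_cellular_dissection al sg capd loc ->
  locally_gentle k (QD al sg capd).
Proof.
case=> alK _.
have inIP : forall a b : qa (QD al sg capd),
    path_in_ideal k (B := QD al sg capd) [:: a; b] <-> brel a b.
  by move=> a b; split; [exact: inI_brel | exact: brel_inI].
split; first exact: qt_qs.
split.
  move=> [A HA]; have := HA; move=> /existsP[h /andP[_ /eqP EA]].
  have cA : #|A| <= 2 by rewrite EA /arcset cards2; case: (_ != _).
  split.
    pose f := fun a : QD1 al sg capd => sg (val a).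
    have fi : injective f by move=> x y /perm_inj /val_inj.
    rewrite -(card_imset _ fi); apply: leq_trans cA; apply: subset_leq_card.
    apply/subsetP=> z /imsetP[a]; rewrite inE => /eqP E ->.
    have := congr1 val E; rewrite /= => <-; by rewrite !inE eqxx.
  rewrite -(card_imset _ val_inj); apply: leq_trans cA; apply: subset_leq_card.
  apply/subsetP=> z /imsetP[a]; rewrite inE => /eqP E ->.
  have := congr1 val E; rewrite /= => <-; by rewrite !inE eqxx.
move=> b; split; [|split; [|split]].
- move=> a1 a2 E1 E2 N1 N2.
  have F : forall a : qa (QD al sg capd), qt a = qs b -> ~ path_in_ideal k [:: a; b] ->
      sg (val a) = val b.
    move=> a E N; have := arcset_eq (congr1 val E) => -[Eb|Eb]; first by rewrite Eb.
    by exfalso; apply: N; apply/inIP; rewrite /= /QDrel Eb.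
  apply: val_inj; apply: (@perm_inj _ sg); exact: (etrans (F _ E1 N1) (esym (F _ E2 N2))).
- move=> a1 a2 _ _ /inIP /eqP E1 /inIP /eqP E2.
  apply: val_inj; apply: (@perm_inj _ sg).
  exact: (etrans (esym (alK _)) (etrans (congr1 al (etrans E1 (esym E2))) (alK _))).
- move=> c1 c2 E1 E2 N1 N2.
  have F : forall c : qa (QD al sg capd), qt b = qs c -> ~ path_in_ideal k [:: b; c] ->
      val c = sg (val b).
    move=> c E N; have := arcset_eq (esym (congr1 val E)) => -[Eb|Eb] //.
    by exfalso; apply: N; apply/inIP; apply/eqP; rewrite Eb alK.
  apply: val_inj; exact: (etrans (F _ E1 N1) (esym (F _ E2 N2))).
- move=> c1 c2 _ _ /inIP /eqP E1 /inIP /eqP E2.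
  apply: val_inj; exact: (etrans (esym E1) E2).
Qed.
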